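(* Let $\hat{\mathbb{N}}=\{n\in\mathbb{N}: n\ge 3\}$, let $n \in \hat{\mathbb{N}}$ and $M \subseteq \hat{\mathbb{N}} \setminus \{n\}$. Then $\mathrm{pPol}\, R^{\Lambda}_n \not\supseteq \bigcap_{m \in M} \mathrm{pPol}\, R^{\Lambda}_m$.
   Context: Partial functions are on $\{0,1\}$: an $n$-ary partial function is a map $f:\operatorname{dom} f\to\{0,1\}$ with $\operatorname{dom} f\subseteq\{0,1\}^n$; an empty intersection of sets of partial functions is understood as the set of all partial functions. For $\rho\subseteq\{0,1\}^h$, $\mathrm{pPol}\,\rho$ is the set of partial functions $f$ such that for every $h\times n$ matrix whose rows lie in $\operatorname{dom} f$ and whose columns lie in $\rho$, the column obtained by applying $f$ row-wise lies in $\rho$. For $m\ge3$, $R^{\Lambda}_m\subseteq\{0,1\}^{m+1}$ is the set of tuples $(x_1,\dots,x_{m+1})$ satisfying $x_1\lor\lnot x_2\lor\cdots\lor\lnot x_{m+1}$ and, for all pairwise distinct $i,j_1,j_2\in\{2,\dots,m+1\}$, $x_i\lor\lnot x_1\lor\lnot x_{j_1}\lor\lnot x_{j_2}$. *)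

(* Defs.v *)
From mathcomp Require Import all_boot.
Set Implicit Arguments. Unset Strict Implicit. Unset Printing Implicit Defensive.

Notation btuple k := {ffun 'I_k -> bool}.

Record pfun := PFun { pf_ar : nat; pf_fun : btuple pf_ar -> option bool }.

Definition pPol (h : nat) (rho : btuple h -> Prop) (f : pfun) : Prop :=
  forall (X : 'I_h -> btuple (pf_ar f)) (y : btuple h),
    (forall i, @pf_fun f (X i) = Some (y i)) ->
    (forall j : 'I_(pf_ar f), rho [ffun i => X i j]) ->
    rho y.

(* R^Lambda_m as a subset of {0,1}^(m+1); coordinate x_{k+1} of the paper
   is x k here (k : 'I_m.+1), so x_1 is x ord0. *)
Definition RLambda (m : nat) (x : btuple m.+1) : Prop :=
  (x ord0 \/ exists j : 'I_m.+1, j != ord0 /\ ~~ x j) /\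
  (forall i j1 j2 : 'I_m.+1,
     i != ord0 -> j1 != ord0 -> j2 != ord0 ->
     i != j1 -> i != j2 -> j1 != j2 ->
     x i \/ ~~ x ord0 \/ ~~ x j1 \/ ~~ x j2).

(* Main.v *)
Require Import Defs.
From mathcomp Require Import all_boot zify.

Definition E1 {n} (p j : 'I_n.+1) : bool := (j == ord0) || ((p != ord0) && (p != j)).
Definition E2 {n} (p j : 'I_n.+1) : bool := (p == ord0) || (p == j).

Lemma RL1 m (x : 'I_m.+1 -> bool) : RLambda [ffun k => x k] ->
  x ord0 \/ exists j, j != ord0 /\ ~~ x j.
Proof. case; rewrite ffunE => -[->|[j [jn]]]; [by left | rewrite ffunE => ?; right; by exists j]. Qed.

Lemma RL2 m (x : 'I_m.+1 -> bool) : RLambda [ffun k => x k] ->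
  forall i j1 j2 : 'I_m.+1, i != ord0 -> j1 != ord0 -> j2 != ord0 ->
     i != j1 -> i != j2 -> j1 != j2 ->
     x i \/ ~~ x ord0 \/ ~~ x j1 \/ ~~ x j2.
Proof. by case=> _ H i j1 j2 a b c d e f; have := H i j1 j2 a b c d e f; rewrite !ffunE. Qed.

Lemma RLintro m (x : 'I_m.+1 -> bool) :
  (x ord0 \/ exists j, j != ord0 /\ ~~ x j) ->
  (forall i j1 j2 : 'I_m.+1, i != ord0 -> j1 != ord0 -> j2 != ord0 ->
     i != j1 -> i != j2 -> j1 != j2 ->
     x i \/ ~~ x ord0 \/ ~~ x j1 \/ ~~ x j2) ->
  RLambda [ffun k => x k].
Proof.
move=> A B; split; first by rewrite ffunE; case: A => [->|[j [jn xj]]]; [left|right; exists j; rewrite ffunE].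
by move=> i j1 j2 a b c d e f; rewrite !ffunE; apply: B.
Qed.

Lemma uniq4 m : 4 <= m -> uniq [:: inord 1; inord 2; inord 3; inord 4 : 'I_m.+1].
Proof. move=> m4; rewrite /= !inE -!val_eqE /= !inordK //; lia. Qed.

Lemma uniq3 m : 3 <= m -> uniq [:: inord 1; inord 2; inord 3 : 'I_m.+1].
Proof. move=> m4; rewrite /= !inE -!val_eqE /= !inordK //; lia. Qed.

Lemma nz4 m (l : 'I_m.+1) : 4 <= m -> l \in [:: inord 1; inord 2; inord 3; inord 4 : 'I_m.+1] -> l != ord0.
Proof. by move=> m4; rewrite !inE => /or4P[]/eqP -> ; rewrite -val_eqE /= inordK //; lia. Qed.

Lemma nz3 m (l : 'I_m.+1) : 3 <= m -> l \in [:: inord 1; inord 2; inord 3 : 'I_m.+1] -> l != ord0.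
Proof. by move=> m4; rewrite !inE => /or3P[]/eqP -> ; rewrite -val_eqE /= inordK //; lia. Qed.
Lemma core n m (phi : 'I_m.+1 -> 'I_n.+1) : 3 <= n -> 3 <= m -> m != n ->
  (forall i, RLambda [ffun k => E1 (phi k) i]) ->
  (forall i, RLambda [ffun k => E2 (phi k) i]) ->
  RLambda [ffun k => phi k != ord0].
Proof.
move=> n3 m3 mn H1 H2.
have C1 i := @RL1 _ _ (H1 i). have D1 i := @RL2 _ _ (H1 i). have D2 i := @RL2 _ _ (H2 i).
apply: RLintro.
- case: (eqVneq (phi ord0) ord0) => [p0|p0]; last by left.
  right; case: (boolP [exists k, (k != ord0) && (phi k == ord0)]).
    by case/existsP=> k /andP[kn /eqP pk]; exists k; rewrite pk eqxx.
  rewrite negb_exists => /forallP nz.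
  have nzk k : k != ord0 -> phi k != ord0 by move=> kn; move: (nz k); rewrite kn.
  have surj j : j != ord0 -> exists2 k, k != ord0 & phi k = j.
    move=> jn; case: (C1 j); first by rewrite /E1 p0 eqxx (negbTE jn).
    move=> [k [kn]]; rewrite /E1 (negbTE jn) (nzk k kn) /= negbK => /eqP pk. by exists k.
  exfalso.
  have le1 : n.+1 <= m.+1.
    have := uniq_leq_size (enum_uniq 'I_n.+1) (s2 := codom phi).
    rewrite size_enum_ord size_codom card_ord; apply => j _.
    case: (eqVneq j ord0) => [->|jn]; first by rewrite -p0 codom_f.
    by case: (surj j jn) => k _ <-; rewrite codom_f.
  case: (boolP (injectiveb phi)) => [/injectiveP inj | /injectivePn [k1 [k2 neq eq12]]].
    have := leq_card phi inj; rewrite !card_ord => le2.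
    by move: mn le1 le2; lia.
  have k1n : k1 != ord0.
    apply/negP => /eqP e; move: (nzk k2); rewrite -eq12 e p0 eqxx; rewrite e eq_sym in neq.
    by move/(_ (neq)).
  have k2n : k2 != ord0.
    by apply/negP => /eqP e; move: (nzk k1 k1n); rewrite eq12 e p0 eqxx.
  have alli p : p != ord0 -> phi p = phi k1.
    move=> pn; case: (eqVneq p k1) => [->//|pk1]; case: (eqVneq p k2) => [->|pk2]; first by rewrite eq12.
    have := D2 (phi k1) p k1 k2 pn k1n k2n pk1 pk2 neq.
    rewrite /E2 p0 -eq12 !eqxx !orbT /=.
    case=> [/orP[/eqP e|/eqP //]|[|[]]] //; by move: (nzk p pn); rewrite /= e eqxx.
  have [j jn ji] : exists2 j : 'I_n.+1, j != ord0 & j != phi k1.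
    case: (eqVneq (phi k1) (inord 1)) => e.
      by exists (inord 2); rewrite ?e -val_eqE /= !inordK //; lia.
    by exists (inord 1); rewrite 1?eq_sym // -val_eqE /= inordK //; lia.
  case: (surj j jn) => k kn pk. by move: ji; rewrite -pk alli // eqxx.
- move=> k j1 j2 kn j1n j2n kj1 kj2 j12.
  case: (eqVneq (phi k) ord0) => [pk|pk]; last by left.
  case: (eqVneq (phi ord0) ord0) => [p0|a0]; first by right; left; rewrite /= ?p0 ?eqxx.
  case: (eqVneq (phi j1) ord0) => [e|b0]; first by do 2 right; left; rewrite /= ?e ?eqxx.
  case: (eqVneq (phi j2) ord0) => [e|c0]; first by do 3 right; rewrite /= ?e ?eqxx.
  exfalso.
  have memA i : i != ord0 -> i \in [:: phi ord0; phi j1; phi j2].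
    move=> iN; rewrite !inE; case: (eqVneq i (phi ord0)) => [->|ia]; first by rewrite ?eqxx.
    have := D1 i k j1 j2 kn j1n j2n kj1 kj2 j12.
    rewrite /E1 pk (negbTE iN) eqxx /= a0 (eq_sym (phi ord0)) ia b0 c0 /= !negbK.
    by case=> [//|[//|[]]] /eqP ->; rewrite eqxx ?orbT.
  have U3 := @uniq3 _ n3.
  have three s : {subset [:: phi ord0; phi j1; phi j2] <= s} -> 3 <= size s.
    move=> sub; apply: (uniq_leq_size U3) => x xin; apply: sub; apply: memA; exact: nz3 n3 xin.
  case: (ltnP 3 n) => [n4 | n3'].
    have U4 := @uniq4 _ n4.
    suff sub : {subset [:: inord 1; inord 2; inord 3; inord 4 : 'I_n.+1] <= [:: phi ord0; phi j1; phi j2]}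
      by have := uniq_leq_size U4 sub.
    move=> x xin; apply: memA; exact: nz4 n4 xin.
  have m4 : 4 <= m by move: mn n3 n3'; lia.
  have ab : phi ord0 != phi j1.
    apply/negP => /eqP e; suff: 3 <= size [:: phi j1; phi j2] by []; apply: three.
    by move=> x; rewrite !inE e orbA orbb.
  have ac : phi ord0 != phi j2.
    apply/negP => /eqP e; suff: 3 <= size [:: phi j1; phi j2] by []; apply: three.
    by move=> x; rewrite !inE e orbC -orbA orbb.
  have bc : phi j1 != phi j2.
    apply/negP => /eqP e; suff: 3 <= size [:: phi ord0; phi j2] by []; apply: three.
    by move=> x; rewrite !inE e orbb.
  have UR := @uniq4 _ m4.
  case: (boolP (all (mem [:: k; j1; j2]) [:: inord 1; inord 2; inord 3; inord 4 : 'I_m.+1])).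
    by move/allP => sub; have := uniq_leq_size UR sub.
  case/allPn => l lin; rewrite !inE !negb_or => /and3P[lk lj1 lj2].
  have ln := @nz4 _ _ m4 lin.
  have kl : k != l by rewrite eq_sym.
  have j1k : j1 != k by rewrite eq_sym.
  have j1l : j1 != l by rewrite eq_sym.
  have j2l : j2 != l by rewrite eq_sym.
  have l1 : (phi l == ord0) || (phi l == phi j1).
    move: (D1 (phi j1) k j2 l kn j2n ln kj2 kl j2l).
    rewrite /E1 pk (negbTE b0) eqxx a0 ab c0 (eq_sym (phi j2)) bc /=.
    by case => [//|[//|[//|]]]; rewrite negb_and !negbK.
  have l2 : (phi l == ord0) || (phi l == phi j2).
    move: (D1 (phi j2) k j1 l kn j1n ln kj1 kl j1l).
    rewrite /E1 pk (negbTE c0) eqxx a0 ac b0 bc /=.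
    by case => [//|[//|[//|]]]; rewrite negb_and !negbK.
  have pl0 : phi l = ord0.
    case/orP: l1 => [/eqP //|/eqP plb]; move: l2; rewrite plb (negbTE b0) (negbTE bc) //.
  move: (D2 (phi ord0) j1 k l j1n kn ln j1k j1l kl).
  by rewrite /E2 (negbTE b0) (eq_sym (phi j1)) (negbTE ab) pk pl0 eqxx /= orbT; case=> [|[|[]]].
Qed.

Definition row n (p : 'I_n.+1) : btuple (n.+1 + n.+1) :=
  [ffun c => match split c with inl j => E1 p j | inr j => E2 p j end].

Definition fsep n : pfun := @PFun (n.+1 + n.+1)
  (fun x => if [pick q | x == @row n q] is Some q then Some (q != ord0) else None).

Lemma fsep_pres n m : 3 <= n -> 3 <= m -> m != n -> pPol (@RLambda m) (fsep n).
Proof.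
move=> n3 m3 mn X y HX HC.
pose phi k := odflt ord0 [pick q | X k == @row n q].
have Hphi k : X k = @row n (phi k) /\ y k = (phi k != ord0).
  move: (HX k); rewrite /phi /=; case: pickP => [q /eqP -> [<-] // | _ //].
have -> : y = [ffun k => phi k != ord0] by apply/ffunP=> k; rewrite ffunE (Hphi k).2.
apply: (@core n m phi n3 m3 mn) => i.
  suff -> : [ffun k => E1 (phi k) i] = [ffun k => X k (lshift (n.+1) i)] by apply: HC.
  apply/ffunP => k; rewrite !ffunE (Hphi k).1 ffunE.
  by have -> : split (lshift n.+1 i) = inl i := unsplitK (inl _ i).
suff -> : [ffun k => E2 (phi k) i] = [ffun k => X k (rshift (n.+1) i)] by apply: HC.
apply/ffunP => k; rewrite !ffunE (Hphi k).1 ffunE.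
by have -> : split (rshift n.+1 i) = inr i := unsplitK (inr _ i).
Qed.

Theorem mainTheorem19 (n : nat) (M : nat -> Prop) :
  3 <= n -> (forall m, M m -> 3 <= m) -> ~ M n ->
  ~ (forall f : pfun, (forall m, M m -> pPol (@RLambda m) f) ->
                      pPol (@RLambda n) f).
Proof.
move=> n3 Mge Mn H.
have P : pPol (@RLambda n) (fsep n).
  apply: H => m Mm; apply: fsep_pres => //; first exact: Mge.
  by apply/eqP => e; apply: Mn; rewrite -e.
have := P (@row n) [ffun p => p != ord0].
have Hrow p : @row n p (rshift n.+1 ord0) = (p == ord0).
  rewrite ffunE; have -> : split (rshift n.+1 (@ord0 n)) = inr ord0 := unsplitK (inr _ ord0).
  by rewrite /E2 orbb.
case.
- move=> p /=; case: pickP => [q /eqP e | /(_ p)]; last by rewrite eqxx.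
  by rewrite ffunE -!Hrow e.
- move=> j; have -> : [ffun i => @row n i j] =
      [ffun i => match split j with inl j' => E1 i j' | inr j' => E2 i j' end]
    by apply/ffunP => i; rewrite !ffunE.
  case: (split j) => j'; apply: RLintro.
  + case: (eqVneq j' ord0) => [->|jn]; first by left; rewrite /E1 eqxx.
    by right; exists j'; split => //; rewrite /E1 (negbTE jn) eqxx.
  + move=> i j1 j2 _ _ _ _ _ _; rewrite /E1; case: (eqVneq j' ord0) => [_|jn]; first by left.
    by right; left; rewrite eqxx.
  + by left; rewrite /E2 eqxx.
  + move=> i j1 j2 _ j1n j2n _ _ j12; right; right.
    rewrite /E2 (negbTE j1n) (negbTE j2n) /=.
    case: (eqVneq j1 j') => [e|]; last by left.
    by right; rewrite -e eq_sym j12.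
- rewrite ffunE; case => [|[p [pn]]]; first by rewrite eqxx.
  by rewrite ffunE pn.
Qed.
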